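(* Let $d$ be an integer and let $G$ be a finite connected $d$-regular simple graph containing no cycle of length $3$ and no cycle of length $5$ as a subgraph. If $\kappa_{LLY}(x,y)>0$ for every edge $xy$ of $G$, then $\kappa_{LLY}(x,y)=2/d$ for every edge $xy$ of $G$.
   Context: For vertices $u,v$ of a connected graph $G$, $d(u,v)$ is the graph distance, $N(v)$ is the neighborhood of $v$, $d_v=|N(v)|$. For $0\le\alpha<1$, the $\alpha$-lazy random walk is $m_x^\alpha(x)=\alpha$, $m_x^\alpha(v)=(1-\alpha)/d_x$ for $v\in N(x)$, $m_x^\alpha(v)=0$ otherwise. The transportation distance between probability distributions $m_1,m_2$ on $V(G)$ is $W(m_1,m_2)=\inf_A\sum_{x,y}A(x,y)d(x,y)$ over couplings $A:V\times V\to[0,1]$ with $\sum_yA(x,y)=m_1(x)$, $\sum_xA(x,y)=m_2(y)$. For distinct $x,y$, $\kappa_\alpha(x,y)=1-W(m_x^\alpha,m_y^\alpha)/d(x,y)$ and $\kappa_{LLY}(x,y)=\lim_{\alpha\to1}\kappa_\alpha(x,y)/(1-\alpha)$. *)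

(* Defs.v *)
From HB Require Import structures.
From mathcomp Require Import all_boot all_order all_algebra.
From mathcomp Require Import all_classical all_reals all_analysis.
Set Implicit Arguments. Unset Strict Implicit. Unset Printing Implicit Defensive.
Import Order.TTheory GRing.Theory Num.Theory numFieldNormedType.Exports.
Local Open Scope classical_set_scope.
Local Open Scope ring_scope.

Definition simple_graph (T : finType) (adj : rel T) : Prop :=
  (forall x y, adj x y = adj y x) /\ (forall x, ~~ adj x x).

Definition connected_graph (T : finType) (adj : rel T) : Prop :=
  forall x y : T, connect adj x y.

Definition nbhd (T : finType) (adj : rel T) (x : T) : {set T} :=
  [set y | adj x y].

Definition deg (T : finType) (adj : rel T) (x : T) : nat := #|nbhd adj x|.

Definition regular (T : finType) (adj : rel T) (d : nat) : Prop :=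
  forall x : T, deg adj x = d.

Definition has_C3 (T : finType) (adj : rel T) : Prop :=
  exists v0 v1 v2 : T, [/\ uniq [:: v0; v1; v2],
    adj v0 v1, adj v1 v2 & adj v2 v0].

Definition has_C5 (T : finType) (adj : rel T) : Prop :=
  exists v0 v1 v2 v3 v4 : T, uniq [:: v0; v1; v2; v3; v4] /\
    [/\ adj v0 v1, adj v1 v2, adj v2 v3, adj v3 v4 & adj v4 v0].

Fixpoint reach (T : finType) (adj : rel T) (n : nat) (x y : T) : bool :=
  match n with
  | 0 => x == y
  | n'.+1 => reach adj n' x y || [exists z, reach adj n' x z && adj z y]
  end.

(* graph distance: least n with a walk of length n from x to y
   (in a connected graph such an n < #|T| exists, so this is exact) *)
Definition gdist (T : finType) (adj : rel T) (x y : T) : nat :=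
  find (fun n => reach adj n x y) (iota 0 #|T|).

Definition lazy_walk (R : realType) (T : finType) (adj : rel T)
    (alpha : R) (x : T) (v : T) : R :=
  if v == x then alpha
  else if adj x v then (1 - alpha) / (deg adj x)%:R else 0.

Definition coupling (R : realType) (T : finType) (m1 m2 : T -> R)
    (A : T -> T -> R) : Prop :=
  [/\ forall x y, 0 <= A x y <= 1,
      forall x, \sum_(y : T) A x y = m1 x &
      forall y, \sum_(x : T) A x y = m2 y].

Definition transport (R : realType) (T : finType) (adj : rel T)
    (m1 m2 : T -> R) : R :=
  inf [set c : R | exists A : T -> T -> R, coupling m1 m2 A /\
       c = \sum_(x : T) \sum_(y : T) A x y * (gdist adj x y)%:R].

Definition kappa (R : realType) (T : finType) (adj : rel T)
    (alpha : R) (x y : T) : R :=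
  1 - transport adj (lazy_walk adj alpha x) (lazy_walk adj alpha y)
      / (gdist adj x y)%:R.

Definition kappaLLY (R : realType) (T : finType) (adj : rel T) (x y : T) : R :=
  let f : R -> R := fun alpha => kappa adj alpha x y / (1 - alpha) in
  lim (f @ at_left (1 : R)).

(* Main.v *)
Require Import Defs.
From HB Require Import structures.
From mathcomp Require Import all_boot.
Set Implicit Arguments. Unset Strict Implicit. Unset Printing Implicit Defensive.

Definition NB (T : finType) (r : rel T) (Y S : {set T}) : {set T} :=
  [set v in Y | [exists u in S, r u v]].

Lemma NB_sub (T : finType) (r : rel T) (Y S : {set T}) : NB r Y S \subset Y.
Proof. by apply/subsetP => v; rewrite inE => /andP[]. Qed.

Lemma hall_ind (T : finType) (r : rel T) n : forall (X Y : {set T}), #|X| <= n ->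
  (forall S : {set T}, S \subset X -> #|S| <= #|NB r Y S|) ->
  exists s : T -> T, {in X &, injective s} /\ {in X, forall u, s u \in Y /\ r u (s u)}.
Proof.
elim: n => [|n IH] X Y hX hH.
  move: hX; rewrite leqn0 => /eqP/cards0_eq ->.
  by exists id; split => [u|u]; rewrite inE.
have [b|nb] := boolP [exists S : {set T}, [&& S \subset X, S != set0, S != X & #|NB r Y S| <= #|S|]].
- case/existsP: b => S0 /and4P[sS0 nS0 S0X hS0].
  have ltS0 : #|S0| < #|X| by apply: proper_card; rewrite properEneq S0X sS0.
  have [s1 [inj1 p1]] : exists s : T -> T, {in S0 &, injective s} /\ {in S0, forall u, s u \in Y /\ r u (s u)}.
    apply: IH; first by rewrite -ltnS (leq_trans ltS0 hX).
    by move=> S sS; apply: hH; apply: subset_trans sS sS0.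
  have ltD : #|X :\: S0| < #|X|.
    rewrite -(cardsID S0 X) (setIidPr sS0) -{1}[#|X :\: S0|]add0n ltn_add2r.
    by rewrite card_gt0.
  have [s2 [inj2 p2]] : exists s : T -> T, {in X :\: S0 &, injective s} /\
      {in X :\: S0, forall u, s u \in Y :\: NB r Y S0 /\ r u (s u)}.
    apply: IH; first by rewrite -ltnS (leq_trans ltD hX).
    move=> S sS.
    have dS : [disjoint S & S0].
      rewrite -setI_eq0; apply/eqP/setP => z; rewrite !inE.
      apply/andP => -[zS zS0]; move/subsetP: sS => /(_ z zS).
      by rewrite inE zS0.
    have h1 := hH (S :|: S0).
    have sU : S :|: S0 \subset X.
      by rewrite subUset sS0 andbT; apply: subset_trans sS (subsetDl _ _).
    have := h1 sU; rewrite cardsU (disjoint_setI0 dS) cards0 subn0.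
    have sub : NB r Y (S :|: S0) \subset NB r (Y :\: NB r Y S0) S :|: NB r Y S0.
      apply/subsetP => v; rewrite !inE => /andP[vY /existsP[u /andP[]]].
      rewrite inE => /orP[uS|uS0] ruv.
        rewrite vY /= orbC; case: (boolP [exists u0 in S0, r u0 v]) => //= _.
        by apply/existsP; exists u; rewrite uS ruv.
      by rewrite vY /= orbC; apply/orP; left; apply/existsP; exists u; rewrite uS0.
    move=> h2; have := leq_trans h2 (subset_leq_card sub).
    move/leq_trans => /(_ _ (leq_card_setU _ _)).
    move=> h3; have := leq_trans h3 (leq_add (leqnn _) hS0).
    by rewrite leq_add2r.
  have inNB : forall u, u \in S0 -> s1 u \in NB r Y S0.
    move=> u uS0; have [h1 h2] := p1 u uS0.
    by rewrite inE h1 /=; apply/existsP; exists u; rewrite uS0.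
  have notNB : forall w, w \in X :\: S0 -> s2 w \notin NB r Y S0.
    by move=> w wD; have [+ _] := p2 w wD; rewrite inE => /andP[].
  exists (fun u => if u \in S0 then s1 u else s2 u); split.
  + move=> u w uX wX /=.
    case: (boolP (u \in S0)) => uS0; case: (boolP (w \in S0)) => wS0.
    * exact: inj1.
    * have wD : w \in X :\: S0 by rewrite inE wS0 wX.
      by move=> e; have := inNB u uS0; rewrite e (negbTE (notNB w wD)).
    * have uD : u \in X :\: S0 by rewrite inE uS0 uX.
      by move=> e; have := inNB w wS0; rewrite -e (negbTE (notNB u uD)).
    * apply: inj2; by rewrite inE ?uS0 ?wS0.
  + move=> u uX /=; case: (boolP (u \in S0)) => uS0; first exact: p1.
    have uD : u \in X :\: S0 by rewrite inE uS0 uX.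
    have [+ ->] := p2 u uD; rewrite inE => /andP[_ ->]; done.
have [X0|[u0 u0X]] := set_0Vmem X.
  by rewrite X0; exists id; split => [u|u]; rewrite inE.
have := hH [set u0]; rewrite sub1set u0X cards1 => /(_ isT).
rewrite card_gt0 => /set0Pn[v0]; rewrite inE => /andP[v0Y /existsP[u1]].
rewrite inE => /andP[/eqP -> ru0v0].
have [s' [inj' p']] : exists s : T -> T, {in X :\ u0 &, injective s} /\
    {in X :\ u0, forall u, s u \in Y :\ v0 /\ r u (s u)}.
  apply: IH.
    by move: hX; rewrite (cardsD1 u0 X) u0X add1n ltnS.
  move=> S sS.
  have [->|Sn0] := eqVneq S set0; first by rewrite cards0.
  have SX : S \subset X by apply: subset_trans sS (subsetDl _ _).
  have SnX : S != X.
    apply/eqP => eSX; have := subsetP sS u0; rewrite eSX u0X !inE eqxx /=.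
    by move=> /(_ isT).
  have lt : #|S| < #|NB r Y S|.
    rewrite ltnNge; apply/negP => le; move/negP: nb; apply.
    by apply/existsP; exists S; rewrite SX Sn0 SnX le.
  have sub : NB r Y S :\ v0 \subset NB r (Y :\ v0) S.
    by apply/subsetP => v; rewrite !inE => /andP[-> /andP[-> ->]].
  move: lt; rewrite (cardsD1 v0 (NB r Y S)) => lt.
  have : #|S| <= #|NB r Y S :\ v0|.
    move: lt; case: (v0 \in NB r Y S) => /= lt'.
      by rewrite add1n ltnS in lt'.
    by rewrite add0n in lt'; apply: ltnW.
  by move/leq_trans; apply; apply: subset_leq_card.
exists (fun u => if u == u0 then v0 else s' u); split.
- move=> u w uX wX /=.
  case: (eqVneq u u0) => [->|uu0]; case: (eqVneq w u0) => [->|wu0] //.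
  + have wD : w \in X :\ u0 by rewrite !inE wu0 wX.
    by move=> e; have [+ _] := p' w wD; rewrite !inE -e eqxx.
  + have uD : u \in X :\ u0 by rewrite !inE uu0 uX.
    by move=> e; have [+ _] := p' u uD; rewrite !inE e eqxx.
  + by apply: inj'; rewrite !inE ?uu0 ?wu0.
- move=> u uX /=; case: (eqVneq u u0) => [->|uu0]; first by [].
  have uD : u \in X :\ u0 by rewrite !inE uu0 uX.
  by have [+ ->] := p' u uD; rewrite !inE => /andP[_ ->].
Qed.

From mathcomp Require Import all_order all_algebra.
From mathcomp Require Import all_classical all_reals all_analysis.
From mathcomp Require Import lra ring.
Import Order.TTheory GRing.Theory Num.Theory numFieldNormedType.Exports.

Section Dist.
Variables (T : finType) (adj : rel T).

Lemma reach_mono n m a b : (n <= m)%N -> reach adj n a b -> reach adj m a b.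
Proof.
elim: m => [|m IH]; first by rewrite leqn0 => /eqP ->.
rewrite leq_eqVlt => /orP[/eqP -> //|]; rewrite ltnS => /IH h /h /= ->//.
Qed.

Lemma gdist_ge a b k : (k <= #|T|)%N -> ~~ reach adj k.-1 a b -> (k <= gdist adj a b)%N.
Proof.
move=> kT nr; rewrite leqNgt; apply/negP => lt.
have hs : (gdist adj a b < size (iota 0 #|T|))%N by rewrite size_iota (leq_trans lt kT).
move: hs; rewrite /gdist -has_find => /(nth_find 0).
rewrite -/(gdist adj a b) nth_iota ?add0n; last first.
  by rewrite (leq_trans lt kT).
move/(reach_mono (m := k.-1)) => h; move: nr; rewrite h //.
by move: lt; case: k {kT h}.
Qed.

Lemma gdist_le a b k : (k < #|T|)%N -> reach adj k a b -> (gdist adj a b <= k)%N.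
Proof.
move=> kT r; rewrite leqNgt; apply/negP => lt.
have := before_find 0 lt; rewrite nth_iota // add0n => /= h.
by rewrite h in r.
Qed.

End Dist.

Section Edge.
Variables (T : finType) (adj : rel T).
Hypothesis Hsym : forall a b, adj a b = adj b a.
Hypothesis Hirr : forall a, ~~ adj a a.
Hypothesis nC3 : ~ has_C3 adj.
Hypothesis nC5 : ~ has_C5 adj.
Variables (x y : T).
Hypothesis xy : adj x y.

Definition X := nbhd adj x :\ y.
Definition Y := nbhd adj y :\ x.

Lemma adj_neq a b : adj a b -> a != b.
Proof. by move=> h; apply/eqP => e; move: h; rewrite e (negbTE (Hirr b)). Qed.

Lemma notri a : adj x a -> adj y a -> False.
Proof.
move=> ha hb; apply: nC3; exists x, y, a; split => //; last by rewrite Hsym.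
rewrite /= !inE negb_or (adj_neq xy) (adj_neq ha) /=.
by rewrite (adj_neq (b := a)) // Hsym.
Qed.

Lemma inX u : (u \in X) = (u != y) && adj x u.
Proof. by rewrite !inE. Qed.
Lemma inY v : (v \in Y) = (v != x) && adj y v.
Proof. by rewrite !inE. Qed.

Lemma card_lb (s : seq T) : uniq s -> (size s <= #|T|)%N.
Proof. by move/card_uniqP <-; apply: max_card. Qed.

Lemma dist1 a b : a != b -> (1 <= gdist adj a b)%N.
Proof.
move=> ab; apply: gdist_ge => //=.
by apply/card_gt0P; exists a.
Qed.

Lemma dist2 a b : a != b -> ~~ adj a b -> (2 <= gdist adj a b)%N.
Proof.
move=> ab nab; apply: gdist_ge => /=.
  by apply: (leq_trans _ (card_lb (s := [:: a; b]) _)) => //=; rewrite inE ab.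
rewrite negb_or ab /=; apply/existsP => -[z /andP[/eqP <-]].
by rewrite (negbTE nab).
Qed.

Lemma dist3 u v : u \in X -> v \in Y -> ~~ adj u v -> (3 <= gdist adj u v)%N.
Proof.
rewrite inX inY => /andP[uy xu] /andP[vx yv] nuv.
have uv : u != v by apply/eqP => e; subst v; exact: (notri xu yv).
have ux : u != x by rewrite eq_sym adj_neq.
have vy : v != y by rewrite eq_sym adj_neq.
have xv : x != v by rewrite eq_sym.
apply: gdist_ge => /=.
  apply: (leq_trans _ (card_lb (s := [:: u; v; x]) _)) => //=.
  by rewrite !inE negb_or uv ux /= andbT eq_sym.
rewrite !negb_or (negbTE uv) /=; apply/andP; split.
  by apply/existsP => -[z /andP[/eqP <-]]; rewrite (negbTE nuv).
apply/existsP => -[z /andP[/orP[/eqP <-|/existsP[w /andP[/eqP <- uz]]]]].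
  by rewrite (negbTE nuv).
move=> zv.
have zx : z != x.
  by apply/eqP => e; subst z; by apply: (notri zv).
have zy : z != y.
  by apply/eqP => e; subst z; apply: (notri xu); rewrite Hsym.
apply: nC5; exists x, u, z, v, y; split.
  rewrite /= !inE !negb_or eq_sym ux eq_sym zx xv (adj_neq xy) /=.
  by rewrite (adj_neq uz) uv uy (adj_neq zv) zy vy.
by split => //; rewrite Hsym.
Qed.

End Edge.

Local Open Scope ring_scope.

Section Gen.
Variables (R : realType) (T : finType) (adj : rel T).

Definition cost (A : T -> T -> R) := \sum_(a : T) \sum_(b : T) A a b * (gdist adj a b)%:R.

Lemma coupling_le_row (m1 m2 : T -> R) A a b : coupling m1 m2 A -> A a b <= m1 a.
Proof.
case=> hA hr _; rewrite -hr (bigD1 b) //= lerDl sumr_ge0 // => c _.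
by case/andP: (hA a c).
Qed.

Lemma coupling_le_col (m1 m2 : T -> R) A a b : coupling m1 m2 A -> A a b <= m2 b.
Proof.
case=> hA _ hc; rewrite -hc (bigD1 a) //= lerDl sumr_ge0 // => c _.
by case/andP: (hA c b).
Qed.

Lemma cost_lb (m1 m2 : T -> R) A (f g : T -> R) : coupling m1 m2 A ->
  (forall a b, m1 a != 0 -> m2 b != 0 -> f a - g b <= (gdist adj a b)%:R) ->
  \sum_a f a * m1 a - \sum_b g b * m2 b <= cost A.
Proof.
move=> hA hL.
have key : \sum_a f a * m1 a - \sum_b g b * m2 b =
    \sum_a \sum_b A a b * (f a - g b).
  have [_ hr hc] := hA.
  under [RHS]eq_bigr do under eq_bigr do rewrite mulrBr.
  under [RHS]eq_bigr do rewrite sumrB.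
  rewrite sumrB; congr (_ - _).
    by apply: eq_bigr => a _; rewrite -mulr_suml hr mulrC.
  rewrite exchange_big; apply: eq_bigr => b _; rewrite -mulr_suml hc mulrC //.
rewrite key /cost; apply: ler_sum => a _; apply: ler_sum => b _.
have [hA0|hApos] := eqVneq (A a b) 0; first by rewrite hA0 !mul0r.
have [hA01 _ _] := hA.
have Apos : 0 < A a b by rewrite lt0r hApos; case/andP: (hA01 a b).
apply: ler_wpM2l; first exact: ltW.
apply: hL.
  by rewrite gt_eqF // (lt_le_trans Apos (coupling_le_row a b hA)).
by rewrite gt_eqF // (lt_le_trans Apos (coupling_le_col a b hA)).
Qed.

Lemma cost_ge0 (m1 m2 : T -> R) A : coupling m1 m2 A -> 0 <= cost A.
Proof.
case=> hA _ _; apply: sumr_ge0 => a _; apply: sumr_ge0 => b _.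
by apply: mulr_ge0; [case/andP: (hA a b)|].
Qed.

Lemma transport_ge (m1 m2 : T -> R) L : (exists A, coupling m1 m2 A) ->
  (forall A, coupling m1 m2 A -> L <= cost A) -> L <= transport adj m1 m2.
Proof.
move=> [A0 h0] hL; apply: lb_le_inf.
  by exists (cost A0), A0.
by move=> c [A [hA ->]]; apply: hL.
Qed.

Lemma transport_le (m1 m2 : T -> R) A : coupling m1 m2 A -> transport adj m1 m2 <= cost A.
Proof.
move=> hA; apply: ge_inf; last by exists A.
exists 0 => c [B [hB ->]]; exact: cost_ge0 hB.
Qed.

Lemma sum_in (A B : {set T}) : \sum_(a in A) ((a \in B)%:R : R) = #|A :&: B|%:R.
Proof.
rewrite (eq_bigr (fun a => if a \in B then 1 else 0)); last by move=> a _; case: (a \in B).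
rewrite -big_mkcondr /= sumr_const; congr (_%:R).
by apply: eq_card => a; rewrite !inE.
Qed.

Lemma sum_e (t : T) (k : R) : \sum_b ((b \in [set t])%:R * k) = k.
Proof.
rewrite (bigD1 t) //= inE eqxx mul1r.
rewrite [X in _ + X]big1 ?addr0 // => b bt.
by rewrite inE (negbTE bt) mul0r.
Qed.

Lemma sum2_ee (s t : T) (k : R) (F : T -> T -> R) :
  \sum_a \sum_b ((a \in [set s])%:R * ((b \in [set t])%:R * k) * F a b) = k * F s t.
Proof.
rewrite (bigD1 s) //= [X in _ + X]big1 ?addr0; last first.
  move=> a ha; apply: big1 => b _; by rewrite inE (negbTE ha) !mul0r.
rewrite (bigD1 t) //= [X in _ + X]big1 ?addr0; last first.
  move=> b hb; by rewrite !inE (negbTE hb) /= !mul0r mulr0 mul0r.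
by rewrite !inE !eqxx !mul1r.
Qed.

Lemma lazy_sum (alpha : R) (h : T -> R) z : (forall a, ~~ adj a a) ->
  \sum_a h a * lazy_walk adj alpha z a =
  h z * alpha + (1 - alpha) / (deg adj z)%:R * \sum_(a in nbhd adj z) h a.
Proof.
move=> Hirr; rewrite (bigD1 z) //= /lazy_walk eqxx; congr (_ + _).
rewrite mulr_sumr big_mkcond [RHS]big_mkcond /=; apply: eq_bigr => a _.
rewrite inE; case: eqVneq => [->|az] /=; first by rewrite (negbTE (Hirr z)).
by case: (adj z a); rewrite ?mulr0 // mulrC.
Qed.

End Gen.

Section Main.
Variables (R : realType) (T : finType) (adj : rel T) (d : nat).
Hypothesis Hsym : forall a b, adj a b = adj b a.
Hypothesis Hirr : forall a, ~~ adj a a.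
Hypothesis Hreg : forall z, deg adj z = d.

Lemma dpos z w : adj z w -> (0 < d)%N.
Proof. by move=> h; rewrite -(Hreg z) card_gt0; apply/set0Pn; exists w; rewrite inE. Qed.

Lemma card_nb z w : adj z w -> (d%:R : R) = 1 + #|nbhd adj z :\ w|%:R.
Proof.
by move=> h; rewrite -(Hreg z) /deg (cardsD1 w) inE h natrD.
Qed.

Section Alpha.
Variable (alpha : R).
Hypothesis (a0 : 0 <= alpha) (a1 : alpha <= 1).
Variables (z w : T).
Hypothesis zw : adj z w.

Lemma dR : (0 : R) < d%:R.
Proof. by rewrite ltr0n (dpos zw). Qed.

Lemma p_ge0 : (0 : R) <= (1 - alpha) / d%:R.
Proof. by rewrite divr_ge0 // ?subr_ge0 // ler0n. Qed.

Lemma p_le1 : (1 - alpha) / d%:R <= 1.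
Proof.
rewrite ler_pdivrMr ?dR // mul1r.
have : (1 : R) <= d%:R by rewrite ler1n (dpos zw).
move=> h. move: a0 a1 => h0 h1. lra.
Qed.

Lemma lazy_ge0 a : 0 <= lazy_walk adj alpha z a.
Proof.
rewrite /lazy_walk Hreg; case: eqP => // _; case: (adj z a) => //; exact: p_ge0.
Qed.

Lemma lazy_le1 a : lazy_walk adj alpha z a <= 1.
Proof.
rewrite /lazy_walk Hreg; case: eqP => // _; case: (adj z a) => //; exact: p_le1.
Qed.

Lemma lazy_sum1 : \sum_a lazy_walk adj alpha z a = 1.
Proof.
have := lazy_sum alpha (fun _ => 1 : R) z Hirr.
under eq_bigr do rewrite mul1r.
move=> ->; rewrite mul1r sumr_const /deg -/(deg adj z) Hreg.
rewrite mulfVK; first by rewrite addrC subrK.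
by rewrite gt_eqF // dR.
Qed.

End Alpha.

Lemma lazy_supp (alpha : R) z a : lazy_walk adj alpha z a != 0 -> a = z \/ adj z a.
Proof.
rewrite /lazy_walk; case: (eqVneq a z) => [->|_] h; first by left.
by move: h; case: (adj z a); [right|rewrite eqxx].
Qed.

Lemma prod_coupling (alpha : R) x y : 0 <= alpha <= 1 -> adj x y ->
  exists A, coupling (lazy_walk adj alpha x) (lazy_walk adj alpha y) A.
Proof.
move=> /andP[a0 a1] xy; have yx : adj y x by rewrite Hsym.
have gx a : 0 <= lazy_walk adj alpha x a by exact: lazy_ge0 a0 a1 x a.
have gy a : 0 <= lazy_walk adj alpha y a by exact: lazy_ge0 a0 a1 y a.
have lx a : lazy_walk adj alpha x a <= 1. have := lazy_le1 a0 a1 xy a. done.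
have ly a : lazy_walk adj alpha y a <= 1. have := lazy_le1 a0 a1 yx a. done.
exists (fun a b => lazy_walk adj alpha x a * lazy_walk adj alpha y b); split.
- move=> a b; rewrite mulr_ge0 //=.
  by rewrite -[1]mulr1; apply: ler_pM.
- by move=> a; rewrite -mulr_sumr (lazy_sum1 _ yx) mulr1.
- by move=> b; rewrite -mulr_suml (lazy_sum1 _ xy) mul1r.
Qed.

End Main.

Lemma W_lb (R : realType) (T : finType) (adj : rel T) (d : nat)
  (Hsym : forall a b, adj a b = adj b a) (Hirr : forall a, ~~ adj a a)
  (Hreg : forall z, deg adj z = d) (nC3 : ~ has_C3 adj) (nC5 : ~ has_C5 adj)
  (x y : T) (xy : adj x y) (alpha : R) (a0 : 0 <= alpha) (a1 : alpha <= 1)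
  (S : {set T}) (sS : S \subset X adj x y) :
  alpha + (1 - alpha) / d%:R * (2 * #|S|%:R - 2 * #|NB adj (Y adj x y) S|%:R + d%:R - 2)
  <= transport adj (lazy_walk adj alpha x) (lazy_walk adj alpha y).
Proof.
set Xs := X adj x y; set Ys := Y adj x y; set N := NB adj Ys S.
have yx : adj y x by rewrite Hsym.
pose f a : R := (a \in [set x])%:R + 2 * (a \in S)%:R.
pose g b : R := (b \in [set x])%:R + (b \in N)%:R - (b \in Ys :\: N)%:R.
have SX u : u \in S -> u \in Xs := fintype.subsetP sS u.
have NY : N \subset Ys := NB_sub adj Ys S.
have xS : x \notin S.
  by apply/negP => /SX; rewrite inX (negbTE (Hirr x)) andbF.
have xYs : x \notin Ys by rewrite inY eqxx.
have yYs : y \notin Ys by rewrite inY (negbTE (Hirr y)) andbF.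
have xN : x \notin N by apply/negP => /(fintype.subsetP NY); rewrite (negbTE xYs).
have yN : y \notin N by apply/negP => /(fintype.subsetP NY); rewrite (negbTE yYs).
have xy' : x != y := adj_neq Hirr xy.
have dl k a' b' : (k <= gdist adj a' b')%N -> (k%:R : R) <= (gdist adj a' b')%:R.
  by rewrite ler_nat.
have Hlip : forall a b, lazy_walk adj alpha x a != 0 -> lazy_walk adj alpha y b != 0 ->
    f a - g b <= (gdist adj a b)%:R.
  move=> a b /lazy_supp ha /lazy_supp hb.
  have D0 a' b' : (0 : R) <= (gdist adj a' b')%:R by rewrite ler0n.
  have gv : (b = y /\ g b = 0) \/ (b = x /\ g b = 1) \/
            (b \in Ys /\ b \in N /\ g b = 1) \/ (b \in Ys /\ b \notin N /\ g b = -1).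
    case: hb => [->|yb].
      left; split => //.
      by rewrite /g finset.in_set1 finset.in_setD eq_sym (negbTE xy') (negbTE yN) (negbTE yYs) andbF subr0 addr0.
    case: (eqVneq b x) => [->|bx].
      right; left; split => //.
      by rewrite /g finset.in_set1 finset.in_setD eqxx (negbTE xN) (negbTE xYs) andbF subr0 addr0.
    have bY : b \in Ys by rewrite inY bx yb.
    right; right; case: (boolP (b \in N)) => bN.
      left; split => //; split => //.
      by rewrite /g finset.in_set1 finset.in_setD (negbTE bx) bN /= subr0 add0r.
    right; split => //; split => //.
    by rewrite /g finset.in_set1 finset.in_setD (negbTE bx) (negbTE bN) bY /= add0r sub0r.
  have nXY u v : u \in Xs -> v \in Ys -> u != v.
    rewrite inX inY => /andP[_ xu] /andP[_ yv]; apply/eqP => e; subst v.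
    exact: (notri Hsym Hirr nC3 xy xu yv).
  case: (eqVneq a x) => [->|ax].
    have fv : f x = 1 by rewrite /f finset.in_set1 eqxx (negbTE xS) mulr0 addr0.
    rewrite fv.
    case: gv => [[-> ->]|[[-> ->]|[[_ [_ ->]]|[bY [_ ->]]]]].
    - have := dl 1%N _ _ (dist1 adj xy'); lra.
    - apply: le_trans (D0 _ _); lra.
    - apply: le_trans (D0 _ _); lra.
    - have xb : x != b by rewrite eq_sym; move: bY; rewrite inY => /andP[].
      have nxb : ~~ adj x b.
        apply/negP => xb'; move: bY; rewrite inY => /andP[_ yb].
        exact: (notri Hsym Hirr nC3 xy xb' yb).
      have := dl 2%N _ _ (dist2 xb nxb); lra.
  case: ha => [e|xa]; first by rewrite e eqxx in ax.
  case: (boolP (a \in S)) => aS.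
    have fv : f a = 2 by rewrite /f finset.in_set1 (negbTE ax) aS add0r mulr1.
    have aX := SX a aS.
    rewrite fv.
    case: gv => [[-> ->]|[[-> ->]|[[bY [_ ->]]|[bY [bN ->]]]]].
    - have ay : a != y by move: aX; rewrite inX => /andP[].
      have nay : ~~ adj a y.
        apply/negP => ay'; exact: (notri Hsym Hirr nC3 xy xa (etrans (Hsym _ _) ay')).
      have := dl 2%N _ _ (dist2 ay nay); lra.
    - have := dl 1%N _ _ (dist1 adj ax); lra.
    - have ab : a != b.
      apply/eqP => e; subst b; move: bY; rewrite inY => /andP[_ ya].
      exact: (notri Hsym Hirr nC3 xy xa ya).
    have := dl 1%N _ _ (dist1 adj ab); lra.
    - have nab : ~~ adj a b.
        apply/negP => ab; move/negP: bN; apply.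
        rewrite /N /NB finset.in_set bY /=; apply/existsP; exists a; rewrite aS ab.
        done.
      have := dl 3%N _ _ (dist3 Hsym Hirr nC3 nC5 xy aX bY nab); lra.
  have fv : f a = 0 by rewrite /f finset.in_set1 (negbTE ax) (negbTE aS) mulr0 addr0.
  rewrite fv.
  case: gv => [[-> ->]|[[-> ->]|[[bY [_ ->]]|[bY [bN ->]]]]].
  - apply: le_trans (D0 _ _); lra.
  - apply: le_trans (D0 _ _); lra.
  - apply: le_trans (D0 _ _); lra.
  - have ab : a != b.
      apply/eqP => e; subst b; move: bY; rewrite inY => /andP[_ ya].
      exact: (notri Hsym Hirr nC3 xy xa ya).
    have := dl 1%N _ _ (dist1 adj ab); lra.
have Heq : alpha + (1 - alpha) / d%:R * (2 * #|S|%:R - 2 * #|N|%:R + d%:R - 2) =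
    \sum_a f a * lazy_walk adj alpha x a - \sum_b g b * lazy_walk adj alpha y b.
  rewrite (lazy_sum alpha f x Hirr) (lazy_sum alpha g y Hirr) !Hreg.
  have fx : f x = 1 by rewrite /f inE eqxx (negbTE xS) mulr0 addr0.
  have gy : g y = 0.
    rewrite /g finset.in_set1 finset.in_setD eq_sym (negbTE xy') (negbTE yN) (negbTE yYs) andbF. by rewrite subr0 addr0.

  have sf : \sum_(a in nbhd adj x) f a = 2 * #|S|%:R.
    rewrite big_split /= -mulr_sumr !sum_in.
    have -> : nbhd adj x :&: [set x] = finset.set0.
      apply/finset.setP => a; rewrite !inE; case: eqVneq => [->|]; by rewrite ?(negbTE (Hirr x)) ?andbF.
    rewrite cards0 add0r (finset.setIidPr _) //.
    by apply/fintype.subsetP => u /SX; rewrite inX => /andP[_]; rewrite inE.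
  have sg : \sum_(b in nbhd adj y) g b = 1 + #|N|%:R - #|Ys :\: N|%:R.
    rewrite sumrB big_split /= !sum_in.
    have -> : nbhd adj y :&: [set x] = [set x].
      by apply/finset.setIidPr; rewrite finset.sub1set inE.
    have sY : Ys \subset nbhd adj y by apply: finset.subsetDl.
    rewrite cards1 (finset.setIidPr (fintype.subset_trans NY sY)).
    by rewrite (finset.setIidPr (fintype.subset_trans (finset.subsetDl _ _) sY)).
  have hd : (d%:R : R) = 1 + #|Ys|%:R by exact: (card_nb R Hreg yx).
  have hY : (#|Ys|%:R : R) = #|N|%:R + #|Ys :\: N|%:R.
    by rewrite -(cardsID N Ys) (finset.setIidPr NY) natrD.
  rewrite fx gy sf sg.
  set p := (1 - alpha) / d%:R.
  rewrite hd hY; ring.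
apply: transport_ge; first by apply: (prod_coupling Hsym Hirr Hreg _ xy); rewrite a0 a1.
move=> A hA; rewrite Heq; exact: cost_lb hA Hlip.
Qed.

Lemma W_ub (R : realType) (T : finType) (adj : rel T) (d : nat)
  (Hsym : forall a b, adj a b = adj b a) (Hirr : forall a, ~~ adj a a)
  (Hreg : forall z, deg adj z = d)
  (x y : T) (xy : adj x y) (alpha : R) (a1 : alpha <= 1)
  (ap : (1 - alpha) / d%:R <= alpha) (s : T -> T)
  (inj : {in X adj x y &, injective s})
  (hs : {in X adj x y, forall u, s u \in Y adj x y /\ adj u (s u)}) :
  transport adj (lazy_walk adj alpha x) (lazy_walk adj alpha y)
  <= alpha + (1 - alpha) / d%:R * (d%:R - 2).
Proof.
set Xs := X adj x y; set Ys := Y adj x y.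
have yx : adj y x by rewrite Hsym.
have xy' : x != y := adj_neq Hirr xy.
set p := (1 - alpha) / d%:R.
have p0 : 0 <= p by rewrite divr_ge0 ?ler0n // subr_ge0.
have xXs : x \notin Xs by rewrite inX (negbTE (Hirr x)) andbF.
have yXs : y \notin Xs by rewrite inX eqxx.
have xYs : x \notin Ys by rewrite inY eqxx.
have yYs : y \notin Ys by rewrite inY (negbTE (Hirr y)) andbF.
have cX : #|Xs|.+1 = d.
  by rewrite -(Hreg x) /deg (cardsD1 y (nbhd adj x)) finset.in_set xy.
have cY : #|Ys|.+1 = d.
  by rewrite -(Hreg y) /deg (cardsD1 x (nbhd adj y)) finset.in_set yx.
pose A a b : R := (a \in [set x])%:R * ((b \in [set x])%:R * p)
  + (a \in [set x])%:R * ((b \in [set y])%:R * (alpha - p))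
  + (a \in [set y])%:R * ((b \in [set y])%:R * p)
  + (a \in Xs)%:R * ((b \in [set s a])%:R * p).
have col4 b : \sum_a (a \in Xs)%:R * ((b \in [set s a])%:R * p) = (b \in Ys)%:R * p.
  have imY : [set s u | u in Xs] = Ys.
    apply/eqP; rewrite eqEcard; apply/andP; split.
      by apply/fintype.subsetP => v /imsetP[u uX ->]; exact: (hs u uX).1.
    rewrite card_in_imset //.
    by have := cY; rewrite -cX => -[->].
  case: (boolP (b \in Ys)) => bY.
    have : b \in [set s u | u in Xs] by rewrite imY.
    case/imsetP => a0 a0X ->.
    rewrite (bigD1 a0) //= a0X finset.in_set1 eqxx !mul1r big1 ?addr0 // => a aa0.
    case: (boolP (a \in Xs)) => aX; last by rewrite mul0r.
    rewrite finset.in_set1; case: eqVneq => [e|]; last by rewrite mul0r mulr0.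
    by have := inj a0 a a0X aX e => e'; rewrite e' eqxx in aa0.
  rewrite mul0r; apply: big1 => a _.
  case: (boolP (a \in Xs)) => aX; last by rewrite mul0r.
  rewrite finset.in_set1; case: eqVneq => [e|]; last by rewrite mul0r mulr0.
  by move: bY; rewrite e (hs a aX).1.
have rows a : \sum_b A a b = lazy_walk adj alpha x a.
  rewrite !big_split /= -!mulr_sumr !sum_e /lazy_walk Hreg -/p.
  case: (eqVneq a x) => [->|ax].
    rewrite !finset.in_set1 eqxx (negbTE xy') (negbTE xXs) /= !mul1r !mul0r; ring.
  case: (eqVneq a y) => [->|ay].
    rewrite !finset.in_set1 eqxx eq_sym (negbTE xy') (negbTE yXs) xy /= !mul1r !mul0r; ring.
  rewrite !finset.in_set1 (negbTE ax) (negbTE ay) inX ay /=.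
  by case: (adj x a) => /=; ring.
have cols b : \sum_a A a b = lazy_walk adj alpha y b.
  rewrite !big_split /= !sum_e col4 /lazy_walk Hreg -/p.
  case: (eqVneq b y) => [->|bY].
    rewrite !finset.in_set1 eqxx eq_sym (negbTE xy') (negbTE yYs) /=; ring.
  case: (eqVneq b x) => [->|bX].
    rewrite !finset.in_set1 eqxx (negbTE xy') (negbTE xYs) yx /=; ring.
  rewrite !finset.in_set1 (negbTE bX) (negbTE bY) inY bX /=.
  by case: (adj y b) => /=; ring.
have A0 a b : 0 <= A a b.
  have ap' : 0 <= alpha - p by rewrite subr_ge0.
  have a1' : 0 <= 1 - alpha by rewrite subr_ge0.
  by rewrite /A !addr_ge0 // !mulr_ge0 // ?invr_ge0 ?ler0n.
have hA : coupling (lazy_walk adj alpha x) (lazy_walk adj alpha y) A.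
  split => // a b; rewrite A0 /=.
  apply: (le_trans (y := lazy_walk adj alpha x a)).
    by rewrite -rows (bigD1 b) //= lerDl sumr_ge0.
  rewrite /lazy_walk; case: eqP => // _; case: (adj x a) => //.
  by rewrite Hreg -/p; apply: le_trans ap a1.
apply: le_trans (transport_le adj hA) _.
pose D a b : R := (gdist adj a b)%:R.
have spl : cost adj A =
    \sum_a \sum_b ((a \in [set x])%:R * ((b \in [set x])%:R * p) * D a b)
  + \sum_a \sum_b ((a \in [set x])%:R * ((b \in [set y])%:R * (alpha - p)) * D a b)
  + \sum_a \sum_b ((a \in [set y])%:R * ((b \in [set y])%:R * p) * D a b)
  + \sum_a \sum_b ((a \in Xs)%:R * ((b \in [set s a])%:R * p) * D a b).
  rewrite /cost -!big_split /=; apply: eq_bigr => a _.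
  rewrite -!big_split /=; apply: eq_bigr => b _.
  by rewrite /A /D !mulrDl.
have t4 : \sum_a \sum_b ((a \in Xs)%:R * ((b \in [set s a])%:R * p) * D a b)
    = \sum_a (a \in Xs)%:R * (p * D a (s a)).
  apply: eq_bigr => a _.
  rewrite (bigD1 (s a)) //= [X in _ + X]big1 ?addr0; last first.
    by move=> b hb; rewrite finset.in_set1 (negbTE hb) /= mul0r mulr0 mul0r.
  by rewrite finset.in_set1 eqxx mul1r mulrA.
have T2 : (1 < #|T|)%N.
  apply: (leq_trans _ (card_lb (s := [:: x; y]) _)) => //=.
  by rewrite /= mem_seq1 xy'.
have Dxx : D x x = 0.
  by apply/eqP; rewrite /D pnatr_eq0 -leqn0; apply: gdist_le => //=; apply: ltnW.
have Dyy : D y y = 0.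
  by apply/eqP; rewrite /D pnatr_eq0 -leqn0; apply: gdist_le => //=; apply: ltnW.
have D1 a b : adj a b -> D a b <= 1.
  move=> ab; rewrite /D -[1]/(1%:R) ler_nat; apply: gdist_le => //=.
  by apply/orP; right; apply/existsP; exists a; rewrite eqxx ab.
have Dxy := D1 x y xy.
have h4 : \sum_a (a \in Xs)%:R * (p * D a (s a)) <= p * #|Xs|%:R.
  rewrite (eq_bigr (fun a => if a \in Xs then p * D a (s a) else 0)); last first.
    by move=> a _; case: (a \in Xs); rewrite ?mul1r ?mul0r.
  rewrite -big_mkcond /=.
  apply: (le_trans (y := \sum_(a in Xs) p)).
    apply: ler_sum => a aX; rewrite -[X in _ <= X]mulr1; apply: ler_wpM2l => //.
    by apply: D1; case: (hs a aX).
  by rewrite sumr_const mulr_natr.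
rewrite spl t4 !(sum2_ee _ _ _ D) Dxx Dyy.
have hxy : (alpha - p) * D x y <= alpha - p.
  by rewrite -[X in _ <= X]mulr1; apply: ler_wpM2l => //; rewrite subr_ge0.
have hd : (d%:R : R) = 1 + #|Xs|%:R by rewrite -cX -addn1 natrD addrC.
rewrite hd; move: hxy h4; set q := p * #|Xs|%:R.
have -> : p * (1 + #|Xs|%:R - 2) = q - p by rewrite /q; ring.
move=> h1 h2; lra.
Qed.

Theorem proposition2p4 (R : realType) (T : finType) (adj : rel T) (d : nat) :
  simple_graph adj -> connected_graph adj -> regular adj d ->
  ~ has_C3 adj -> ~ has_C5 adj ->
  (forall x y : T, adj x y -> 0 < kappaLLY R adj x y) ->
  forall x y : T, adj x y -> kappaLLY R adj x y = 2 / d%:R.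
Proof.
move=> [Hsym Hirr] _ Hreg nC3 nC5 Hpos x y xy.
have d0 : (0 < d)%N := dpos Hreg xy.
have dR : (0 : R) < d%:R by rewrite ltr0n.
have d1 : (1 : R) <= d%:R by rewrite ler1n.
have xy' : x != y := adj_neq Hirr xy.
have T2 : (1 < #|T|)%N.
  apply: (leq_trans _ (card_lb (s := [:: x; y]) _)) => //=.
  by rewrite /= mem_seq1 xy'.
have g1 : (gdist adj x y)%:R = 1 :> R.
  apply/eqP; rewrite pnatr_eq1 eqn_leq dist1 // andbT.
  apply: gdist_le => //=.
  by apply/orP; right; apply/existsP; exists x; rewrite eqxx xy.
set Xs := X adj x y; set Ys := Y adj x y.
pose f (alpha : R) := kappa adj alpha x y / (1 - alpha).
have hk (alpha : R) : kappa adj alpha x y =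
    1 - transport adj (lazy_walk adj alpha x) (lazy_walk adj alpha y).
  by rewrite /kappa g1 divr1.
have hlim : kappaLLY R adj x y = lim (f @ (1 : R)^'-)%classic by [].
have h12 : (1 / 2 : R) < 1 by lra.
case: (boolP [exists S : {set T}, (S \subset Xs) && (#|NB adj Ys S| < #|S|)%N]) => [hb|hnb].
  exfalso.
  case/existsP: hb => S /andP[sS ltS].
  have ev : (\forall alpha \near (1 : R)^'-, f alpha <= 0)%classic.
    near=> alpha.
    have h1 : 1 / 2 < alpha by near: alpha; exact: nbhs_left_gt.
    have h2 : alpha < 1 by near: alpha; exact: nbhs_left_lt.
    have a0 : 0 <= alpha by lra.
    have a1 : alpha <= 1 by lra.
    have hW := W_lb Hsym Hirr Hreg nC3 nC5 xy a0 a1 sS.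
    have p0 : 0 <= (1 - alpha) / d%:R by rewrite divr_ge0 ?ler0n //; lra.
    have pd : (1 - alpha) / d%:R * d%:R = 1 - alpha by rewrite mulfVK // gt_eqF.
    have hS : (#|NB adj Ys S|%:R : R) + 1 <= #|S|%:R by rewrite natr1 ler_nat.
    have hm : (1 - alpha) / d%:R * d%:R <= (1 - alpha) / d%:R *
        (2 * #|S|%:R - 2 * #|NB adj Ys S|%:R + d%:R - 2).
      by apply: ler_wpM2l => //; lra.
    rewrite /f hk; apply: mulr_le0_ge0; last by rewrite invr_ge0; lra.
    move: hW hm; rewrite pd; lra.
  have : kappaLLY R adj x y <= 0.
    rewrite hlim; case: (pselect (cvg (f @ (1 : R)^'-)%classic)) => hc.
      exact: limr_le hc ev.
    suff -> : lim (f @ (1 : R)^'-)%classic = 0 by [].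
    by apply: getPN => l hl; apply: hc; exact: (cvgP l hl).
  by have := Hpos x y xy; lra.
have hH : forall S : {set T}, S \subset Xs -> (#|S| <= #|NB adj Ys S|)%N.
  by move=> S sS; move/existsPn: hnb => /(_ S); rewrite sS /= -leqNgt.
have [sig [inj hs]] := hall_ind (leqnn _) hH.
have hNB0 : #|NB adj Ys finset.set0| = 0%N.
  apply/eqP; rewrite cards_eq0; apply/eqP/finset.setP => v.
  rewrite finset.in_set finset.in_set0; apply/andP => -[_ /existsP[u]].
  by rewrite finset.in_set0.
rewrite hlim; apply: lim_near_cst; first exact: norm_hausdorff.
near=> alpha.
have h1 : 1 / 2 < alpha by near: alpha; exact: nbhs_left_gt.
have h2 : alpha < 1 by near: alpha; exact: nbhs_left_lt.
have a0 : 0 <= alpha by lra.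
have a1 : alpha <= 1 by lra.
have ap : (1 - alpha) / d%:R <= alpha.
  rewrite ler_pdivrMr //.
  have : alpha <= alpha * d%:R by rewrite ler_peMr.
  lra.
have hW := W_lb Hsym Hirr Hreg nC3 nC5 xy a0 a1 (finset.sub0set Xs).
have hU := W_ub Hsym Hirr Hreg xy a1 ap inj hs.
move: hW; rewrite cards0 hNB0 !mulr0 subr0 add0r => hW.
have eW : transport adj (lazy_walk adj alpha x) (lazy_walk adj alpha y) =
    alpha + (1 - alpha) / d%:R * (d%:R - 2) by apply/le_anti; rewrite hU hW.
rewrite /f hk eW.
have dn : (d%:R : R) != 0 by rewrite gt_eqF.
have an : 1 - alpha != 0 by rewrite gt_eqF // subr_gt0.
by field; rewrite dn an.
Unshelve. all: by end_near.
Qed.
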